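(* In the adversarial edge arrival model for integral matchings, no online algorithm (deterministic or randomized) achieves a guarantee larger than $0.58065$ on graphs of maximum degree three. That is, for every online algorithm $\mathcal{ALG}$ and every $\gamma>0.58065$ there is an instance (a graph of maximum degree at most three with an adversarial edge arrival order) and a timepoint $t$ at which $\mathbb{E}[|M_t|] < \gamma\,\nu(G_t)$, where $M_t$ is the matching held by $\mathcal{ALG}$ at time $t$.
   Context: Adversarial edge arrival model for integral matchings: edges arrive one at a time in an order chosen by an (oblivious) adversary; upon arrival of an edge, the algorithm must immediately and irrevocably decide whether to add it to its current matching (which must remain a matching). A (possibly randomized) algorithm achieves guarantee $\gamma$ if at every timepoint the expected size of its matching is at least $\gamma\cdot\nu(G_t)$, where $\nu(G_t)$ is the maximum matching cardinality of the arrived graph $G_t$. *)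

(* Defs.v *)
From HB Require Import structures.
From mathcomp Require Import all_boot all_order all_algebra.
From mathcomp Require Import reals.
Set Implicit Arguments. Unset Strict Implicit. Unset Printing Implicit Defensive.
Import Order.TTheory GRing.Theory Num.Theory.

(* Vertices are labelled by naturals; an (undirected) edge is a pair. *)
Definition edge := (nat * nat)%type.

Definition verts (m : seq edge) : seq nat := flatten [seq [:: e.1; e.2] | e <- m].

Definition is_matching (m : seq edge) : bool := uniq (verts m).

Definition nu (s : seq edge) : nat :=
  \max_(b : (size s).-tuple bool | is_matching (mask b s)) size (mask b s).

Definition norm_edge (e : edge) : edge := (minn e.1 e.2, maxn e.1 e.2).
Definition deg (s : seq edge) (v : nat) : nat :=
  count (fun e : edge => (e.1 == v) || (e.2 == v)) s.
Definition valid_instance (s : seq edge) : bool :=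
  [&& all (fun e : edge => e.1 != e.2) s,
      uniq (map norm_edge s) &
      all (fun v => deg s v <= 3) (verts s)].

(* A randomized online algorithm, as a behavioural strategy: given the edges
   arrived so far, its own past decisions (true = edge was added), and the
   newly arriving edge, it returns the probability of adding the new edge
   (this is only consulted when adding it keeps a matching; otherwise the
   edge is necessarily rejected). *)
Definition online_alg (R : realType) := seq edge -> seq bool -> edge -> R.

Definition feasible (e : edge) (M : seq edge) : bool :=
  (e.1 \notin verts M) && (e.2 \notin verts M).

Local Open Scope ring_scope.

Fixpoint exp_run (R : realType) (alg : online_alg R) (past : seq edge)
    (dec : seq bool) (fut : seq edge) (k : nat) : R :=
  match k, fut with
  | k'.+1, e :: fut' =>
      if feasible e (mask dec past) then
        let p := alg past dec e in
        p * exp_run alg (rcons past e) (rcons dec true) fut' k'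
        + (1 - p) * exp_run alg (rcons past e) (rcons dec false) fut' k'
      else exp_run alg (rcons past e) (rcons dec false) fut' k'
  | _, _ => (count id dec)%:R
  end.

Definition expected_size (R : realType) (alg : online_alg R) (s : seq edge)
    (t : nat) : R := exp_run alg [::] [::] s t.

(* Main.v *)
Require Import Defs.
From HB Require Import structures.
From mathcomp Require Import all_boot all_order all_algebra.
From mathcomp Require Import reals lra.
Import Order.TTheory GRing.Theory Num.Theory.
Local Open Scope ring_scope.

Inductive tr := Leaf | Nd of nat & seq bool & edge & tr & tr.

Fixpoint Det (t : tr) (past : seq edge) (dec : seq bool) : nat :=
  match t with
  | Leaf => 0
  | Nd w _ e c sib =>
    (if feasible e (mask dec past) then
       maxn (w * count id (rcons dec true) + Det c (rcons past e) (rcons dec true))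
            (w * count id (rcons dec false) + Det c (rcons past e) (rcons dec false))
     else w * count id (rcons dec false) + Det c (rcons past e) (rcons dec false))
    + Det sib past dec
  end.

Section S.
Variable R : realType.
Variable alg : online_alg R.

Fixpoint Val (t : tr) (past : seq edge) (dec : seq bool) : R :=
  match t with
  | Leaf => 0
  | Nd w _ e c sib =>
    (if feasible e (mask dec past) then
       alg past dec e * (w%:R * (count id (rcons dec true))%:R + Val c (rcons past e) (rcons dec true))
     + (1 - alg past dec e) * (w%:R * (count id (rcons dec false))%:R + Val c (rcons past e) (rcons dec false))
     else w%:R * (count id (rcons dec false))%:R + Val c (rcons past e) (rcons dec false))
    + Val sib past dec
  end.

Fixpoint nodes (t : tr) : seq (nat * seq bool * seq edge) :=
  match t with
  | Leaf => [::]
  | Nd w m e c sib => (w, m, [:: e]) :: [seq (x.1, e :: x.2) | x <- nodes c] ++ nodes sib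
  end.

Lemma exp_run_cons past dec e s :
  exp_run alg past dec (e :: s) (size s).+1 =
  if feasible e (mask dec past) then
    alg past dec e * exp_run alg (rcons past e) (rcons dec true) s (size s)
    + (1 - alg past dec e) * exp_run alg (rcons past e) (rcons dec false) s (size s)
  else exp_run alg (rcons past e) (rcons dec false) s (size s).
Proof. by []. Qed.

Lemma exp_run_nil past dec : exp_run alg past dec [::] 0 = (count id dec)%:R.
Proof. by []. Qed.

Lemma Val_decomp t past dec :
  Val t past dec = \sum_(x <- nodes t) x.1.1%:R * exp_run alg past dec x.2 (size x.2).
Proof.
elim: t past dec => [|w m e c IHc sib IHs] past dec /=; first by rewrite big_nil.
rewrite big_cons big_cat big_map /= IHs !IHc addrA; congr (_ + _).
have -> : \sum_(j <- nodes c) j.1.1%:R * exp_run alg past dec (e :: j.2) (size j.2).+1 =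
  \sum_(j <- nodes c) j.1.1%:R * (if feasible e (mask dec past) then
    alg past dec e * exp_run alg (rcons past e) (rcons dec true) j.2 (size j.2)
    + (1 - alg past dec e) * exp_run alg (rcons past e) (rcons dec false) j.2 (size j.2)
  else exp_run alg (rcons past e) (rcons dec false) j.2 (size j.2)) by [].
rewrite /=.
case: ifP => _.
  rewrite [X in _ = _ + X](_ : _ = alg past dec e * \sum_(j <- nodes c) j.1.1%:R * exp_run alg (rcons past e) (rcons dec true) j.2 (size j.2)
     + (1 - alg past dec e) * \sum_(j <- nodes c) j.1.1%:R * exp_run alg (rcons past e) (rcons dec false) j.2 (size j.2)); last first.
    rewrite !mulr_sumr -big_split /=; apply: eq_bigr => j _.
    by rewrite mulrDr !mulrA [_ * alg _ _ _]mulrC [_ * (1 - _)]mulrC.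
  rewrite !mulrDr; set a := alg past dec e.
  rewrite !mulrA [a * w%:R]mulrC [(1 - a) * w%:R]mulrC -!mulrA.
  by rewrite addrACA.
by [].
Qed.

Hypothesis alg_prob : forall past dec e, 0 <= alg past dec e <= 1.

Lemma Val_le_Det t past dec : Val t past dec <= (Det t past dec)%:R.
Proof.
elim: t past dec => [|w m e c IHc sib IHs] past dec /=; first by [].
rewrite natrD lerD //.
have H1 := IHc (rcons past e) (rcons dec true).
have H0 := IHc (rcons past e) (rcons dec false).
case: ifP => _; last by rewrite natrD natrM lerD.
have /andP[p0 p1] := alg_prob past dec e.
set p := alg past dec e.
set A := (w * _ + _)%N; set B := (w * _ + _)%N.
have HA : w%:R * (count id (rcons dec true))%:R + Val c (rcons past e) (rcons dec true) <= A%:R :> R.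
  by rewrite /A natrD natrM lerD.
have HB : w%:R * (count id (rcons dec false))%:R + Val c (rcons past e) (rcons dec false) <= B%:R :> R.
  by rewrite /B natrD natrM lerD.
apply: (le_trans (y := p * A%:R + (1 - p) * B%:R)).
  by rewrite lerD // ler_wpM2l // subr_ge0.
have hA : A%:R <= (maxn A B)%:R :> R by rewrite ler_nat leq_maxl.
have hB : B%:R <= (maxn A B)%:R :> R by rewrite ler_nat leq_maxr.
apply: (le_trans (y := p * (maxn A B)%:R + (1 - p) * (maxn A B)%:R)).
  by rewrite lerD // ler_wpM2l // subr_ge0.
by rewrite -mulrDl addrC subrK mul1r.
Qed.
End S.

Lemma nu_ge s (b : seq bool) : size b = size s -> is_matching (mask b s) -> (size (mask b s) <= nu s)%N.
Proof.
move=> Hs Hm; rewrite /nu.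
pose tb : (size s).-tuple bool := Tuple (introT eqP Hs).
have -> : mask b s = mask tb s by [].
by apply: (@leq_bigmax_cond _ (fun tb : (size s).-tuple bool => is_matching (mask tb s)) (fun tb => size (mask tb s)) tb).
Qed.

Definition T0 : tr := (Nd 34 [:: true] (0, 1) (Nd 0 [:: false; false] (0, 2) (Nd 0 [:: false; false; false] (1, 2) (Nd 55 [:: false; false; true; true] (0, 3) Leaf Leaf) (Nd 21 [:: false; true; true] (1, 3) (Nd 0 [:: false; false; false; false] (3, 4) (Nd 13 [:: false; true; false; true; true] (1, 5) (Nd 0 [:: false; false; false; false; false; false] (4, 6) (Nd 8 [:: false; true; false; false; true; true; true] (3, 7) (Nd 0 [:: false; false; false; false; false; false; false; false] (6, 8) (Nd 5 [:: false; true; false; false; true; false; true; true; true] (4, 9) (Nd 0 [:: false; false; false; false; false; false; false; false; false; false] (8, 10) (Nd 3 [:: false; true; false; false; true; false; true; false; true; true; true] (6, 11) (Nd 0 [:: false; false; false; false; false; false; false; false; false; false; false; false] (10, 12) (Nd 2 [:: false; true; false; false; true; false; true; false; true; false; true; true; true] (8, 13) (Nd 0 [:: false; false; false; false; false; false; false; false; false; false; false; false; false; false] (12, 14) (Nd 1 [:: false; true; false; false; true; false; true; false; true; false; true; false; true; true; true] (10, 15) (Nd 0 [:: false; false; false; false; false; false; false; false; false; false; false; false; false; false; false; false] (14, 16) (Nd 1 [:: false; true; false; false; true; false; true; false; true; false; true; false; true; false; true; true; true] (12, 17) (Nd 0 [:: false; false; false; false; false; false; false; false; false; false; false; false; false;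 false; false; false; false; false] (16, 18) (Nd 1 [:: false; true; false; false; true; false; true; false; true; false; true; false; true; false; true; false; true; true; true] (14, 19) Leaf Leaf) Leaf) Leaf) Leaf) Leaf) Leaf) Leaf) Leaf) Leaf) Leaf) Leaf) Leaf) Leaf) Leaf) Leaf) Leaf) Leaf)) Leaf) Leaf).

Definition chk (x : nat * seq bool * seq edge) : bool :=
  [&& valid_instance x.2, size x.1.2 == size x.2 & is_matching (mask x.1.2 x.2)].

Lemma T0_chk : all chk (nodes T0).
Proof. by vm_compute. Qed.

Lemma T0_K : (\sum_(x <- nodes T0) x.1.1 * size (mask x.1.2 x.2))%N = 341%N.
Proof. by rewrite unlock; vm_compute. Qed.

Lemma T0_Det : Det T0 [::] [::] = 198%N.
Proof. by vm_compute. Qed.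

Theorem mainTheorem2 (R : realType) (alg : online_alg R)
  (alg_prob : forall (past : seq edge) (dec : seq bool) (e : edge),
      0 <= alg past dec e <= 1)
  (gamma : R) (hgamma : 58065%:R / 100000%:R < gamma) :
  exists (s : seq edge) (t : nat),
    [/\ valid_instance s, (t <= size s)%N &
        expected_size alg s t < gamma * (nu (take t s))%:R].
Proof.
have [/hasP [x xin Hx]|/hasPn Hn] :=
  boolP (has (fun x : nat * seq bool * seq edge =>
     expected_size alg x.2 (size x.2) < gamma * (nu x.2)%:R) (nodes T0)).
  exists x.2, (size x.2); rewrite take_size; split => //.
  by have := allP T0_chk x xin => /and3P[].
exfalso.
have g0 : 0 < gamma.
  apply: lt_trans hgamma; by rewrite divr_gt0 // ltr0n.
have H1 : gamma * 341%:R <= \sum_(x <- nodes T0) x.1.1%:R * exp_run alg [::] [::] x.2 (size x.2).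
  rewrite -T0_K natr_sum mulr_sumr !big_seq; apply: ler_sum => x xin.
  have /and3P[_ /eqP hs hm] := allP T0_chk x xin.
  have := Hn x xin; rewrite -leNgt => hle.
  rewrite natrM mulrCA ler_wpM2l //.
  apply: le_trans hle; apply: ler_wpM2l; first exact: ltW.
  rewrite ler_nat.
  exact: nu_ge.
have H2 := @Val_le_Det R alg alg_prob T0 [::] [::].
rewrite -(@Val_decomp R alg) in H1.
rewrite T0_Det in H2.
have := le_trans H1 H2 => h.
lra.
Qed.
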